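(* The sequence $(m_n)_{n\ge1}$ is strictly increasing. Consequently, if $T_1$ and $T_2$ are minimal trees, then $I(T_1)<I(T_2)$ if and only if $|T_1|<|T_2|$.
   Context: A rooted tree $T$ is a finite tree with a distinguished vertex, its root; its order $|T|$ is its number of vertices. For vertices $u,v$, the infimum of $u$ and $v$ is the vertex common to the path from $u$ to the root and the path from $v$ to the root that is furthest from the root. A set $X\subseteq V(T)$ is infima closed if the infimum of any two elements of $X$ lies in $X$. $I(T)$ denotes the number of nonempty infima closed subsets of $V(T)$. For $n\ge1$, $m_n=\min\{I(T): T \text{ a rooted tree with } n \text{ vertices}\}$; a rooted tree $T$ with $I(T)=m_{|T|}$ is called minimal. *)

(* Defs.v *)
From mathcomp Require Import all_boot.
From Stdlib Require Import ClassicalEpsilon.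
Set Implicit Arguments. Unset Strict Implicit. Unset Printing Implicit Defensive.

Inductive rtree := Node of seq rtree.

(* Vertices of a rooted tree, represented by their addresses: the sequence of
   child indices along the path from the root.  The root is [::].
   Addresses are pairwise distinct. *)
Fixpoint verts (t : rtree) : seq (seq nat) :=
  let: Node cs := t in
  [::] :: (fix vs (i : nat) (cs : seq rtree) : seq (seq nat) :=
             match cs with
             | [::] => [::]
             | c :: cs' => map (cons i) (verts c) ++ vs i.+1 cs'
             end) 0 cs.

Definition nverts (t : rtree) : nat := size (verts t).

(* Infimum of two vertices: the deepest common vertex of their root paths,
   i.e. the longest common prefix of their addresses. *)
Fixpoint inf (u v : seq nat) : seq nat :=
  match u, v with
  | a :: u', b :: v' => if a == b then a :: inf u' v' else [::]
  | _, _ => [::]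
  end.

Definition vtx (t : rtree) (i : 'I_(nverts t)) : seq nat := nth [::] (verts t) i.

Definition inf_closed (t : rtree) (X : {set 'I_(nverts t)}) : bool :=
  [forall i in X, forall j in X, exists k in X, vtx k == inf (vtx i) (vtx j)].

Definition Icl (t : rtree) : nat :=
  #|[set X : {set 'I_(nverts t)} | (X != set0) && inf_closed X]|.

Definition pb (P : Prop) : bool :=
  if excluded_middle_informative P then true else false.

Fixpoint chain (n : nat) : rtree :=
  match n with 0 => Node [::] | k.+1 => Node [:: chain k] end.

Lemma order_chain n : nverts (chain n) = n.+1.
Proof.
elim: n => [|n IH] //=.
rewrite /nverts /= cats0 size_map.
by rewrite /nverts in IH; rewrite IH.
Qed.

Lemma m_ex (n : nat) :
  exists k, pb (exists t, nverts t = n.+1 /\ Icl t = k).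
Proof.
exists (Icl (chain n)); rewrite /pb.
case: excluded_middle_informative => // [[]].
by exists (chain n); rewrite order_chain.
Qed.

(* m_n = min { I(T) : |T| = n }, for n >= 1 (m_0 := 0, unused). *)
Definition m (n : nat) : nat :=
  match n with 0 => 0 | n'.+1 => ex_minn (m_ex n') end.

Definition minimal (t : rtree) : Prop := Icl t = m (nverts t).

(* Main.v *)
Require Import Defs.
From mathcomp Require Import all_boot.
From Stdlib Require Import ClassicalEpsilon.
Set Implicit Arguments. Unset Strict Implicit. Unset Printing Implicit Defensive.

Fixpoint vsl (i : nat) (cs : seq rtree) : seq (seq nat) :=
  match cs with [::] => [::] | c :: cs' => map (cons i) (verts c) ++ vsl i.+1 cs' end.
Lemma vertsE cs : verts (Node cs) = [::] :: vsl 0 cs. Proof. by []. Qed.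

Definition allP (P : rtree -> Prop) (cs : seq rtree) : Prop :=
  foldr (fun c A => P c /\ A) True cs.

Fixpoint tind (P : rtree -> Prop) (H : forall cs, allP P cs -> P (Node cs)) t : P t :=
  match t with Node cs => H cs ((fix F cs : allP P cs :=
     match cs with [::] => I | c :: cs' => conj (tind H c) (F cs') end) cs) end.

Lemma inf_uu u : inf u u = u.
Proof. by elim: u => //= a u ->; rewrite eqxx. Qed.

Definition shift (w : seq nat) := if w is a :: w' then a.+1 :: w' else [::].

Lemma map_shift i cs : map shift (vsl i cs) = vsl i.+1 cs.
Proof.
elim: cs i => //= c cs IH i; rewrite map_cat IH -map_comp; congr (_ ++ _).
Qed.

Lemma vsl_head i cs w : w \in vsl i cs -> exists j w', w = j :: w' /\ i <= j.
Proof.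
elim: cs i => //= c cs IH i; rewrite mem_cat => /orP [/mapP [w' _ ->]|/IH [j [w' [-> h]]]].
  by exists i, w'.
by exists j, w'; split => //; apply: ltnW.
Qed.

Lemma vsl_uniq cs i : allP (fun t => uniq (verts t)) cs -> uniq (vsl i cs).
Proof.
elim: cs i => //= c cs IH i [Hc Hcs]; rewrite cat_uniq map_inj_uniq //; last by move=> x y [].
rewrite Hc IH // andbT /=; apply/hasPn => w /vsl_head [j [w' [-> h]]].
apply/mapP => [[x _ [E _]]]; by rewrite E ltnn in h.
Qed.

Lemma verts_uniq t : uniq (verts t).
Proof.
elim/tind: t => cs H; rewrite vertsE /= vsl_uniq // andbT.
by apply/negP => /vsl_head [j [w' [E _]]].
Qed.
Definition ihom (f : seq nat -> seq nat) := forall u v, f (inf u v) = inf (f u) (f v).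

Lemma size_vsl i cs : size (vsl i.+1 cs) = size (vsl i cs).
Proof. by rewrite -map_shift size_map. Qed.

Lemma nverts_ge1 t : 0 < nverts t.
Proof. by case: t. Qed.

Lemma nverts_cons c cs : nverts (Node (c :: cs)) = (nverts c + size (vsl 1 cs)).+1.
Proof. by rewrite /nverts vertsE /= size_cat size_map. Qed.

Definition lift0 (f : seq nat -> seq nat) (w : seq nat) :=
  match w with [::] => [::] | 0 :: w' => 0 :: f w' | _ :: _ => w end.

Lemma leaf_remove t : 2 <= nverts t -> exists t' f, nverts t' = (nverts t).-1 /\ ihom f /\
  subseq (map f (verts t')) (verts t).
Proof.
elim/tind: t => [[|c cs]] H; first by [].
move=> _; case: H => Hc _.
case: c Hc => [[|d ds]] Hc.
- exists (Node cs), shift; split; first by rewrite /nverts /= size_vsl.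
  split.
  + by case=> [|a u] [|b v] //=; rewrite eqSS; case: ifP.
  + rewrite vertsE /= map_shift; change (subseq ([:: [::]] ++ vsl 1 cs) ([:: [::]] ++ ([:: 0] :: vsl 1 cs))).
    by apply: cat_subseq => //; apply: subseq_cons.
- have H2 : 1 < nverts (Node (d :: ds)).
    move: (nverts_ge1 d); rewrite /nverts /= size_cat size_map.
    by case: (size (verts d)).
  have [c' [f0 [Hs [Hf Hsub]]]] := Hc H2.
  exists (Node (c' :: cs)), (lift0 f0); split.
    rewrite [nverts (Node (Node _ :: _))]nverts_cons nverts_cons Hs.
    by case: (nverts (Node (d :: ds))) H2.
  split.
  + case=> [|[|a] u] [|[|b] v] //=; rewrite ?Hf //; by case: ifP.
  + change (subseq (map (lift0 f0) ([:: [::]] ++ (map (cons 0) (verts c') ++ vsl 1 cs)))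
       ([:: [::]] ++ (map (cons 0) (verts (Node (d::ds))) ++ vsl 1 cs))).
    rewrite !map_cat -map_comp; apply: cat_subseq => //.
    have -> : map (lift0 f0) (vsl 1 cs) = vsl 1 cs.
      rewrite map_id_in // => w /vsl_head [j [w' [-> h]]].
      by case: j h.
    rewrite cat_subseq //.
    have -> : map (lift0 f0 \o cons 0) (verts c') = map (cons 0) (map f0 (verts c')).
      by rewrite -map_comp.
    exact: map_subseq.
Qed.

Lemma Icl_lt t t' f : ihom f -> subseq (map f (verts t')) (verts t) ->
  nverts t' < nverts t -> Icl t' < Icl t.
Proof.
move=> Hf Hsub Hlt.
have Hu : uniq (map f (verts t')) := subseq_uniq Hsub (verts_uniq t).
have Hmem : forall i : 'I_(nverts t'), f (vtx i) \in verts t.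
  move=> i; apply: (mem_subseq Hsub); apply: map_f; exact: mem_nth.
pose g (i : 'I_(nverts t')) : 'I_(nverts t) := Ordinal (etrans (index_mem _ _) (Hmem i)).
have Hg : forall i, vtx (g i) = f (vtx i) by move=> i; rewrite /vtx /= nth_index.
have ginj : injective g.
  move=> i j /(congr1 (@vtx t)); rewrite !Hg /vtx.
  rewrite -!(nth_map [::] [::] f) // => E; apply: val_inj.
  by apply/eqP; rewrite -(nth_uniq [::] _ _ Hu) ?size_map ?ltn_ord // E.
have [x Hx] : exists x, x \notin [set g i | i in [set: 'I_(nverts t')]].
  apply/existsP; rewrite -negb_forall; apply/negP => /forallP H.
  have : #|[set: 'I_(nverts t)]| <= #|[set g i | i in [set: 'I_(nverts t')]]|.
    by apply: subset_leq_card; apply/subsetP => y _; apply: H.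
  by rewrite card_imset // !cardsT !card_ord leqNgt Hlt.
rewrite /Icl.
set A := [set X | _]; set B := [set X | _].
rewrite -(card_imset A (imset_inj ginj)).
apply: proper_card; apply/properP; split.
  apply/subsetP => Y /imsetP [X]; rewrite !inE => /andP [X0 XC] ->.
  rewrite imset_eq0 X0 /=.
  apply/forallP => i; apply/implyP => /imsetP [a Ha ->].
  apply/forallP => j; apply/implyP => /imsetP [b Hb ->].
  move/forallP: XC => /(_ a) /implyP /(_ Ha) /forallP /(_ b) /implyP /(_ Hb) /existsP [k /andP [Hk /eqP E]].
  apply/existsP; exists (g k); rewrite imset_f //= !Hg E Hf eqxx. done.
exists [set x].
  rewrite inE; apply/andP; split; first by apply/set0Pn; exists x; rewrite inE.
  apply/forallP => i; apply/implyP; rewrite inE => /eqP ->.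
  apply/forallP => j; apply/implyP; rewrite inE => /eqP ->.
  by apply/existsP; exists x; rewrite inE eqxx inf_uu /=.
apply/imsetP => [[X _ E]].
have : x \in [set g i | i in X] by rewrite -E set11.
by case/imsetP => a _ Ex; rewrite Ex imset_f ?inE in Hx.
Qed.

Lemma pbP (P : Prop) : pb P -> P.
Proof. by rewrite /pb; case: excluded_middle_informative. Qed.
Lemma Ppb (P : Prop) : P -> pb P.
Proof. by rewrite /pb; case: excluded_middle_informative. Qed.

Lemma m_le n t : nverts t = n.+1 -> m n.+1 <= Icl t.
Proof.
move=> Ht; rewrite /m; case: ex_minnP => k _ Hmin; apply: Hmin.
by apply: Ppb; exists t.
Qed.

Lemma m_spec n : exists t, nverts t = n.+1 /\ Icl t = m n.+1.
Proof. by rewrite /m; case: ex_minnP => k /pbP. Qed.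

Lemma m_inc n : 1 <= n -> m n < m n.+1.
Proof.
case: n => // n _.
have [t [Ht Hm]] := m_spec n.+1.
have [t' [f [Hs [Hf Hsub]]]] : exists t' f, nverts t' = (nverts t).-1 /\ ihom f /\
  subseq (map f (verts t')) (verts t) by apply: leaf_remove; rewrite Ht.
rewrite -Hm; apply: (leq_trans _ (Icl_lt Hf Hsub _)); last by rewrite Hs Ht.
by rewrite ltnS; apply: m_le; rewrite Hs Ht.
Qed.

Lemma m_lt a b : 1 <= a -> a < b -> m a < m b.
Proof.
move=> Ha; elim: b => // b IH; rewrite ltnS leq_eqVlt => /orP [/eqP <-|Hab].
  exact: m_inc.
by apply: (ltn_trans (IH Hab)); apply: m_inc; apply: (leq_trans Ha (ltnW Hab)).
Qed.

Theorem lemma2p2 :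
  (forall n : nat, 1 <= n -> m n < m n.+1) /\
  (forall T1 T2 : rtree, minimal T1 -> minimal T2 ->
     (Icl T1 < Icl T2 <-> nverts T1 < nverts T2)).
Proof.
split; first exact: m_inc.
move=> T1 T2; rewrite /minimal => -> ->; split.
  move=> H; rewrite ltnNge; apply/negP; rewrite leq_eqVlt => /orP [/eqP E|E].
    by rewrite E ltnn in H.
  by have := m_lt (nverts_ge1 T2) E; rewrite ltnNge ltnW.
exact: m_lt (nverts_ge1 T1).
Qed.
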